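(* Let $X$ be a fake weighted projective space with weights $(\lambda_0,\ldots,\lambda_n)$, ordered so that $\lambda_0\leq\lambda_1\leq\cdots\leq\lambda_n$, with $\gcd\{\lambda_0,\ldots,\lambda_n\}=1$, and suppose $X$ has at worst canonical singularities. Let $h:=\sum_{i=0}^n\lambda_i$. Then for every $k\in\{2,\ldots,n\}$, $$\frac{\lambda_k}{h}\leq\frac{1}{n-k+2},$$ and the inequality is strict if $X$ has at worst terminal singularities.
   Context: Let $N\cong\mathbb{Z}^n$ be a lattice and $N_\mathbb{R}:=N\otimes_\mathbb{Z}\mathbb{R}$. Let $\rho_0,\ldots,\rho_n\in N$ be primitive lattice points with $N_\mathbb{R}=\sum_{i=0}^n\mathbb{R}_{\geq0}\rho_i$. There are positive integers $\lambda_0,\ldots,\lambda_n$ with $\gcd\{\lambda_0,\ldots,\lambda_n\}=1$, unique up to order, such that $\sum_{i=0}^n\lambda_i\rho_i=0$. The cones $\sigma_i$ generated by $\{\rho_j: j\neq i\}$ generate a complete simplicial fan; the associated projective toric variety $X$ is called a fake weighted projective space with weights $(\lambda_0,\ldots,\lambda_n)$. *)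

(* Defs.v *)
From HB Require Import structures.
From mathcomp Require Import all_boot all_order all_algebra.
Set Implicit Arguments. Unset Strict Implicit. Unset Printing Implicit Defensive.
Import Order.TTheory GRing.Theory Num.Theory.
Local Open Scope ring_scope.

(* The lattice N = Z^n is 'rV[int]_n; N_Q = 'rV[rat]_n. *)
Definition ratv n (v : 'rV[int]_n) : 'rV[rat]_n := map_mx (fun z : int => z%:~R) v.

(* v is a primitive lattice point: v is not k * w for an integer k <> 1, k >= 0
   (this also forces v <> 0). *)
Definition primitive n (v : 'rV[int]_n) : Prop :=
  forall (k : nat) (w : 'rV[int]_n), v = (k%:Z) *: w -> k = 1%N.

(* The rho_i positively span N_R (equivalently N_Q, the rho_i being rational). *)
Definition pos_spanning n (rho : 'I_n.+1 -> 'rV[int]_n) : Prop :=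
  forall v : 'rV[rat]_n, exists c : 'I_n.+1 -> rat,
    (forall j, 0 <= c j) /\ v = \sum_j c j *: ratv (rho j).

(* c expresses the lattice point v as a nonnegative combination of the rays of
   sigma_i = cone(rho_j : j <> i); then u_{sigma_i}(v) = \sum_j c j. *)
Definition cone_coeffs n (rho : 'I_n.+1 -> 'rV[int]_n) (i : 'I_n.+1)
    (v : 'rV[int]_n) (c : 'I_n.+1 -> rat) : Prop :=
  c i = 0 /\ (forall j, 0 <= c j) /\ ratv v = \sum_j c j *: ratv (rho j).

(* Toric (Reid) criterion: canonical iff every nonzero lattice point v of each
   maximal cone sigma_i satisfies u_{sigma_i}(v) >= 1. *)
Definition fwps_canonical n (rho : 'I_n.+1 -> 'rV[int]_n) : Prop :=
  forall i v c, cone_coeffs rho i v c -> v != 0 -> 1 <= \sum_j c j.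

(* terminal iff the only lattice points of sigma_i with u_{sigma_i}(v) <= 1 are
   0 and the ray generators. *)
Definition fwps_terminal n (rho : 'I_n.+1 -> 'rV[int]_n) : Prop :=
  forall i v c, cone_coeffs rho i v c -> v != 0 -> (forall j, v != rho j) ->
    1 < \sum_j c j.

(* Main.v *)
Require Import Defs.
From HB Require Import structures.
From mathcomp Require Import all_boot all_order all_algebra.
Import Order.TTheory GRing.Theory Num.Theory.
Local Open Scope ring_scope.

Lemma ratvD n (a b : 'rV[int]_n) : ratv (a + b) = ratv a + ratv b.
Proof. by apply/matrixP => i j; rewrite !mxE rmorphD. Qed.
Lemma ratvN n (a : 'rV[int]_n) : ratv (- a) = - ratv a.
Proof. by apply/matrixP => i j; rewrite !mxE rmorphN. Qed.
Lemma ratvZ n (c : int) (a : 'rV[int]_n) : ratv (c *: a) = c%:~R *: ratv a.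
Proof. by apply/matrixP => i j; rewrite !mxE rmorphM. Qed.
Lemma ratv_sum n m (F : 'I_m -> 'rV[int]_n) :
  ratv (\sum_i F i) = \sum_i ratv (F i).
Proof.
apply/matrixP => i j; rewrite !mxE summxE rmorph_sum.
rewrite summxE; by apply: eq_bigr => k _; rewrite !mxE.
Qed.
Lemma ratv_inj n (a : 'rV[int]_n) : ratv a = 0 -> a = 0.
Proof.
move/matrixP => H; apply/matrixP => i j; move: (H i j); rewrite !mxE.
by move/eqP; rewrite intr_eq0 => /eqP.
Qed.

Lemma kern n (rho : 'I_n.+1 -> 'rV[int]_n) (lambda : 'I_n.+1 -> nat)
    (Hspan : pos_spanning rho)
    (Hpos : forall i, (0 < lambda i)%N)
    (Hrel : \sum_(i < n.+1) (lambda i)%:Z *: rho i = 0)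
    (u : 'rV[rat]_n.+1) :
  \sum_i u 0 i *: ratv (rho i) = 0 -> forall i0, u 0 i0 = 0 -> u = 0.
Proof.
move=> Hu i0 Hi0.
pose M : 'M[rat]_(n.+1, n) := \matrix_i ratv (rho i).
have rowM i : row i M = ratv (rho i) by rewrite rowK.
have HM (w : 'rV[rat]_n.+1) : w *m M = \sum_i w 0 i *: ratv (rho i).
  by rewrite mulmx_sum_row; apply: eq_bigr => i _; rewrite rowM.
have full : row_full M.
  rewrite -sub1mx; apply/row_subP => i.
  have [c [_ Hc]] := Hspan (row i 1%:M).
  apply/submxP; exists (\row_j c j); rewrite HM Hc.
  by apply: eq_bigr => j _; rewrite mxE.
pose l : 'rV[rat]_n.+1 := \row_i (lambda i)%:R.
have lK : (l <= kermx M)%MS.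
  apply/sub_kermxP; rewrite HM.
  have r0 : ratv 0 = 0 :> 'rV[rat]_n by apply/matrixP => a b; rewrite !mxE.
  have E := congr1 (@ratv n) Hrel; rewrite ratv_sum r0 in E.
  rewrite -[RHS]E; apply: eq_bigr => i _; by rewrite ratvZ mxE.
have l0 : l != 0.
  apply/eqP => /matrixP /(_ 0 i0); rewrite !mxE => /eqP.
  by rewrite pnatr_eq0 => /eqP E; have := Hpos i0; rewrite E.
have rK : \rank (kermx M) = 1%N.
  by rewrite mxrank_ker (eqnP full) subSnn.
have Kl : (kermx M <= l)%MS.
  by rewrite -(mxrank_leqif_sup lK) rK rank_rV l0.
have uK : (u <= kermx M)%MS by apply/sub_kermxP; rewrite HM.
have [a Ha] := sub_rVP (submx_trans uK Kl).
move: Hi0; rewrite Ha !mxE => /eqP; rewrite mulf_eq0 pnatr_eq0.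
have := Hpos i0; rewrite lt0n => /negbTE ->; rewrite orbF.
by move/eqP => ->; rewrite scale0r.
Qed.

Lemma sum_ind m k : \sum_(j < m) (if (k <= j)%N then 1 else 0 : rat) = (m - k)%:R.
Proof.
elim: m => [|m IH]; first by rewrite big_ord0 sub0n.
rewrite big_ord_recr /= IH.
case: (leqP k m) => H.
  by rewrite subSn // -addn1 natrD.
have -> : (m - k = 0)%N by apply/eqP; rewrite subn_eq0 ltnW.
have -> : (m.+1 - k = 0)%N by apply/eqP; rewrite subn_eq0.
by rewrite addr0.
Qed.

Lemma ineq (a H m : nat) (s : rat) : (0 < a)%N -> (0 < H)%N -> (0 < m)%N ->
  s = H%:R / a%:R - (m.-1)%:R ->
  ((a%:R / H%:R <= 1 / m%:R :> rat) = (1 <= s)) /\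
  ((a%:R / H%:R < 1 / m%:R :> rat) = (1 < s)).
Proof.
move=> a0 H0 m0 ->.
have a0' : 0 < a%:R :> rat by rewrite ltr0n.
have H0' : 0 < H%:R :> rat by rewrite ltr0n.
have m0' : 0 < m%:R :> rat by rewrite ltr0n.
have em : 1 + (m.-1)%:R = m%:R :> rat by rewrite addrC natr1 prednK.
rewrite lerBrDr ltrBrDr em ler_pdivlMr // ltr_pdivlMr //.
rewrite mulrAC ler_pdivrMr // ltr_pdivrMr // mul1r ler_pdivlMr // ltr_pdivlMr //.
by rewrite [a%:R * _]mulrC.
Qed.

Theorem mainTheorem12 (n : nat) (rho : 'I_n.+1 -> 'rV[int]_n)
    (lambda : 'I_n.+1 -> nat)
    (Hprim : forall i, primitive (rho i))
    (Hspan : pos_spanning rho)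
    (Hpos : forall i, (0 < lambda i)%N)
    (Hgcd : (\big[gcdn/0%N]_(i < n.+1) lambda i)%N = 1%N)
    (Hrel : \sum_(i < n.+1) (lambda i)%:Z *: rho i = 0)
    (Hsorted : forall i j : 'I_n.+1, (i <= j)%N -> (lambda i <= lambda j)%N)
    (Hcan : fwps_canonical rho) :
  let h := (\sum_(i < n.+1) lambda i)%N in
  forall k : 'I_n.+1, (2 <= k)%N ->
    ((lambda k)%:R / h%:R <= 1 / ((n - k + 2)%N)%:R :> rat) /\
    (fwps_terminal rho ->
       (lambda k)%:R / h%:R < 1 / ((n - k + 2)%N)%:R :> rat).
Proof.
move=> h k Hk.
have ek : (k <= n)%N by rewrite -ltnS ltn_ord.
have lk0 := Hpos k.
have h0 : (0 < h)%N.
  by rewrite /h (bigD1 k) //= ltn_addr.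
pose e := fun i : 'I_n.+1 => (if (k <= i)%N then 1 else 0 : rat).
pose w := \sum_(i < n.+1) (if (k <= i)%N then 1 else 0 : int) *: rho i.
have r0 : ratv 0 = 0 :> 'rV[rat]_n by apply/matrixP => a b; rewrite !mxE.
have rw : ratv w = \sum_i e i *: ratv (rho i).
  rewrite ratv_sum; apply: eq_bigr => i _; rewrite ratvZ /e.
  by case: (k <= i)%N.
have rl : \sum_i (lambda i)%:R *: ratv (rho i) = 0 :> 'rV[rat]_n.
  have E := congr1 (@ratv n) Hrel; rewrite ratv_sum r0 in E.
  rewrite -[RHS]E; apply: eq_bigr => i _; by rewrite ratvZ.
have lk0' : (lambda k)%:R != 0 :> rat by rewrite pnatr_eq0 -lt0n.
pose c := fun j => (lambda j)%:R / (lambda k)%:R - e j.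
have cc : cone_coeffs rho k (- w) c.
  split; [|split].
  - by rewrite /c /e leqnn divff.
  - move=> j; rewrite /c /e; case: leqP => Hj.
      rewrite subr_ge0 ler_pdivlMr ?ltr0n // mul1r ler_nat.
      exact: Hsorted.
    by rewrite subr0 divr_ge0 ?ler0n.
  - rewrite ratvN rw /c.
    rewrite [RHS](eq_bigr (fun j => ((lambda j)%:R / (lambda k)%:R) *: ratv (rho j) - e j *: ratv (rho j))); last by move=> j _; rewrite /c scalerBl.
    rewrite sumrB.
    have -> : \sum_i ((lambda i)%:R / (lambda k)%:R) *: ratv (rho i) = 0.
      under eq_bigr do rewrite mulrC -scalerA.
      by rewrite -scaler_sumr rl scaler0.
    by rewrite sub0r.
have sumc : \sum_j c j = h%:R / (lambda k)%:R - ((n - k + 2)%N.-1)%:R.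
  rewrite /c sumrB -mulr_suml -natr_sum sum_ind.
  congr (_ - _%:R); rewrite subSn // addn2 //.
have [Ile Ilt] := @ineq _ _ _ (\sum_j c j) lk0 h0 (ltn_addl (n - k) (isT : (0 < 2)%N)) sumc.
have i0P : (nat_of_ord (@inord n 0) < k)%N.
  by rewrite inordK // (leq_trans _ Hk).
split.
  rewrite Ile; apply: (Hcan k (- w) c cc).
  apply/eqP => /eqP; rewrite oppr_eq0 => /eqP w0.
  have := @kern n rho lambda Hspan Hpos Hrel (\row_i e i).
  move=> /(_ _ (inord 0)).
  rewrite mxE /e leqNgt i0P /= => /(_ _ erefl).
  have -> : \sum_i (\row_i0 e i0) 0 i *: ratv (rho i) = 0.
    by rewrite -[RHS]r0 -w0 rw; apply: eq_bigr => i _; rewrite mxE.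
  move=> /(_ erefl) /matrixP /(_ 0 ord_max); rewrite !mxE /e.
  have -> : (k <= @ord_max n)%N by [].
  by move/eqP; rewrite oner_eq0.
move=> Hter; rewrite Ilt; apply: (Hter k (- w) c cc).
  apply/eqP => /eqP; rewrite oppr_eq0 => /eqP w0.
  have := @kern n rho lambda Hspan Hpos Hrel (\row_i e i).
  move=> /(_ _ (inord 0)).
  rewrite mxE /e leqNgt i0P /= => /(_ _ erefl).
  have -> : \sum_i (\row_i0 e i0) 0 i *: ratv (rho i) = 0.
    by rewrite -[RHS]r0 -w0 rw; apply: eq_bigr => i _; rewrite mxE.
  move=> /(_ erefl) /matrixP /(_ 0 ord_max); rewrite !mxE /e.
  have -> : (k <= @ord_max n)%N by [].
  by move/eqP; rewrite oner_eq0.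
move=> j; apply/eqP => wj.
have n1 : (0 < n)%N := ltnW (leq_trans Hk ek).
pose i0 : 'I_n.+1 := inord (j == 0 :> nat).
have i0k : (nat_of_ord i0 < k)%N.
  rewrite /i0 inordK; first by apply: leq_trans Hk; case: (_ == _).
  by case: (_ == _) => //=; rewrite ltnS n1.
have i0j : (i0 == j) = false.
  apply/negbTE; apply/eqP => E; move: i0k (congr1 (@nat_of_ord _) E).
  rewrite /i0 inordK; last by case: (_ == _) => //=; rewrite ltnS n1.
  by case: (nat_of_ord j) => [|[|jj]].
have := @kern n rho lambda Hspan Hpos Hrel (\row_i (e i + (i == j)%:R)).
move=> /(_ _ i0).
rewrite mxE /e leqNgt i0k i0j add0r /= => /(_ _ erefl).
have -> : \sum_i (\row_i1 (e i1 + (i1 == j)%:R)) 0 i *: ratv (rho i) = 0.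
  have E : ratv (w + rho j) = 0 by rewrite -wj addrN r0.
  rewrite ratvD rw in E; rewrite -[RHS]E.
  under eq_bigr => i _ do rewrite mxE scalerDl.
  rewrite big_split /=; congr (_ + _).
  rewrite (bigD1 j) //= eqxx scale1r big1 ?addr0 // => i /negbTE ->.
  by rewrite scale0r.
move=> /(_ erefl) /matrixP /(_ 0 ord_max); rewrite !mxE /e.
have -> : (k <= @ord_max n)%N by [].
by move/eqP; rewrite paddr_eq0 ?ler0n // oner_eq0.
Qed.
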